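(* Let $x_1,\dots,x_n\in\mathbb{R}^2$ satisfy $x_i\prec x_j$ whenever $i<j$, and let $p\ge2$. For $k\in\{2,\dots,p\}$ and $i\in\{k,\dots,n\}$, let $C^{MM}_{k,i}$ be the optimal value of the Max-Min $k$-dispersion problem among the points $x_1,\dots,x_i$, i.e. $C^{MM}_{k,i}=\max_{1\le i_1<\dots<i_k\le i}\min_{1\le a<b\le k}d_{i_a,i_b}$. Then $C^{MM}_{2,i}=d_{1,i}$ for all $i\in\{2,\dots,n\}$, and for all $k\in\{3,\dots,p\}$ and $i\in\{k,\dots,n\}$, $$C^{MM}_{k,i}=\max_{j\in\{k-1,\dots,i-1\}}\min\left(C^{MM}_{k-1,j},\,d_{j,i}\right).$$
   Context: For $y=(y^1,y^2),z=(z^1,z^2)\in\mathbb{R}^2$ write $y\prec z$ iff $y^1<z^1$ and $y^2>z^2$. Fix $\alpha>0$, let $d$ be the Euclidean distance, and set $d_{ij}=d(x_i,x_j)^\alpha$. *)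

(* Defs.v *)
From HB Require Import structures.
From mathcomp Require Import all_boot all_order all_algebra.
From mathcomp Require Import all_classical all_reals all_analysis.
Set Implicit Arguments. Unset Strict Implicit. Unset Printing Implicit Defensive.
Import Order.TTheory GRing.Theory Num.Theory.
Local Open Scope ring_scope.

Definition prec {R : realType} (y z : R * R) : Prop := y.1 < z.1 /\ z.2 < y.2.

Definition eucl {R : realType} (y z : R * R) : R :=
  Num.sqrt ((y.1 - z.1) ^+ 2 + (y.2 - z.2) ^+ 2).

(* d_{ij} = d(x_i, x_j)^alpha  (points indexed by nat, x_1..x_n used) *)
Definition dd {R : realType} (alpha : R) (x : nat -> R * R) (i j : nat) : R :=
  powR (eucl (x i) (x j)) alpha.

(* admissible index choices 1 <= i_1 < ... < i_k <= i, encoded as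
   f : 'I_k -> 'I_(i+1), f a = i_{a+1} *)
Definition admissible (k i : nat) (f : {ffun 'I_k -> 'I_i.+1}) : bool :=
  [forall a : 'I_k, (0 < f a)%N] &&
  [forall a : 'I_k, forall b : 'I_k, (a < b)%N ==> (f a < f b)%N].

(* C^{MM}_{k,i} = max over admissible choices of min over pairs a<b of d_{i_a,i_b},
   computed in the extended reals (max of empty = -oo, min of empty = +oo). *)
Definition CMM {R : realType} (alpha : R) (x : nat -> R * R) (k i : nat) : \bar R :=
  \big[maxe/-oo%E]_(f : {ffun 'I_k -> 'I_i.+1} | admissible f)
     \big[mine/+oo%E]_(a : 'I_k)
        \big[mine/+oo%E]_(b : 'I_k | (a < b)%N) (dd alpha x (f a) (f b))%:E.

(* Main.v *)
Require Import Defs.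
From HB Require Import structures.
From mathcomp Require Import all_boot all_order all_algebra.
From mathcomp Require Import all_classical all_reals all_analysis.
From mathcomp Require Import lra zify.
Import Order.TTheory GRing.Theory Num.Theory.
Local Open Scope ring_scope.

Section Aux.
Variables (R : realType) (alpha : R) (n : nat) (x : nat -> R * R).
Hypothesis ha : 0 < alpha.
Hypothesis hx : forall i j : nat, (1 <= i)%N -> (i < j)%N -> (j <= n)%N -> prec (x i) (x j).

Lemma coord_mono a b : (1 <= a)%N -> (a <= b)%N -> (b <= n)%N ->
  (x a).1 <= (x b).1 /\ (x b).2 <= (x a).2.
Proof.
move=> h1 h2 h3; case: (ltngtP a b) h2 => // [ab _|-> _]; last by [].
by have [] := hx _ _ h1 ab h3 => u v; split; apply: ltW.
Qed.

Lemma dd_mono a a' b' b : (1 <= a)%N -> (a <= a')%N -> (a' < b')%N ->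
  (b' <= b)%N -> (b <= n)%N -> dd alpha x a' b' <= dd alpha x a b.
Proof.
move=> h1 h2 h3 h4 h5.
have [u1 u2] := coord_mono _ _ h1 h2 (leq_trans (ltnW h3) (leq_trans h4 h5)).
have h1' : (1 <= a')%N := leq_trans h1 h2.
have [v1 v2] := coord_mono _ _ h1' (ltnW h3) (leq_trans h4 h5).
have [w1 w2] := coord_mono _ _ (leq_trans h1' (ltnW h3)) h4 h5.
rewrite /dd; apply: ge0_ler_powR; [exact: ltW| by rewrite nnegrE sqrtr_ge0
  | by rewrite nnegrE sqrtr_ge0|].
rewrite /eucl ler_sqrt; last by rewrite addr_ge0 // sqr_ge0.
move: u1 u2 v1 v2 w1 w2.
set A := (x a).1; set A' := (x a').1; set B' := (x b').1; set B := (x b).1.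
set C := (x a).2; set C' := (x a').2; set D' := (x b').2; set E := (x b).2.
move=> *; rewrite !expr2; nra.
Qed.
End Aux.
Section Adm.
Variables (k i : nat) (f : {ffun 'I_k -> 'I_i.+1}).
Hypothesis hf : admissible f.

Lemma adm_pos (a : 'I_k) : (0 < f a)%N.
Proof. by move: hf => /andP[/forallP] . Qed.

Lemma adm_lt (a b : 'I_k) : (a < b)%N -> (f a < f b)%N.
Proof. by move: hf => /andP[_ /forallP /(_ a) /forallP /(_ b) /implyP]. Qed.

Lemma adm_le (a b : 'I_k) : (a <= b)%N -> (f a <= f b)%N.
Proof.
rewrite leq_eqVlt => /orP[/eqP/val_inj -> //|/adm_lt]; exact: ltnW.
Qed.

Lemma adm_ge (a : 'I_k) : (a < f a)%N.
Proof.
case: a => t Ht /=; elim: t Ht => [|t IH] Ht; first exact: adm_pos.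
have Ht' : (t < k)%N by apply: ltnW.
apply: leq_ltn_trans (IH Ht') _.
by apply: (@adm_lt (Ordinal Ht') (Ordinal Ht)).
Qed.
End Adm.
Arguments adm_pos {k i f}.
Arguments adm_lt {k i f} hf {a b}.
Arguments adm_le {k i f} hf {a b}.
Arguments adm_ge {k i f}.

Lemma min_bigmax_le (R : realType) (T : finType) (P : pred T) (F : T -> \bar R)
  (c X : \bar R) : (forall t, P t -> (mine (F t) c <= X)%E) ->
  (mine (\big[maxe/-oo%E]_(t | P t) F t) c <= X)%E.
Proof.
move=> H; elim/big_ind: _ => //.
  by rewrite min_l ?leNye.
move=> a b Ha Hb; rewrite maxEle; by case: ifP.
Qed.

Lemma bmin_le (R : realType) (I : finType) (P : pred I) (F : I -> \bar R) j m :
  P j -> (F j <= m)%E -> (\big[mine/+oo%E]_(i | P i) F i <= m)%E.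
Proof. by move=> Pj; apply: le_trans; apply: bigmin_le_cond. Qed.

Arguments bmin_le {R I P F} j {m}.

Lemma le_bmax (R : realType) (I : finType) (P : pred I) (F : I -> \bar R) j m :
  P j -> (m <= F j)%E -> (m <= \big[maxe/-oo%E]_(i | P i) F i)%E.
Proof. by move=> Pj H; apply: (le_trans H); apply: le_bigmax_cond. Qed.

Arguments le_bmax {R I P F j m}.

Theorem proposition9 (R : realType) (alpha : R) (n p : nat) (x : nat -> R * R) :
  0 < alpha -> (2 <= p)%N ->
  (forall i j : nat, (1 <= i)%N -> (i < j)%N -> (j <= n)%N -> prec (x i) (x j)) ->
  (forall i : nat, (2 <= i <= n)%N -> CMM alpha x 2 i = (dd alpha x 1 i)%:E) /\
  (forall k i : nat, (3 <= k <= p)%N -> (k <= i <= n)%N ->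
     CMM alpha x k i =
       \big[maxe/-oo%E]_(k.-1 <= j < i) mine (CMM alpha x k.-1 j) (dd alpha x j i)%:E).
Proof.
move=> ha hp hx; have mono := @dd_mono R alpha n x ha hx.
split.
- move=> i /andP[i2 iin].
  apply/le_anti/andP; split.
  + apply: bigmax_le => [|f hf] /=; first exact: leNye.
    pose o0 := (@Ordinal 2 0 isT); pose o1 := (@Ordinal 2 1 isT).
    apply: (bmin_le (o0)) => //; apply: (bmin_le (o1)) => //.
    rewrite lee_fin; apply: mono => //.
    * exact: (adm_pos hf o0).
    * exact: (adm_lt hf (a:=o0) (b:=o1) isT).
    * by rewrite -ltnS ltn_ord.
  + pose g : {ffun 'I_2 -> 'I_i.+1} := [ffun a : 'I_2 => if val a == 0%N then inord 1 else inord i : 'I_i.+1].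
    have gv a : nat_of_ord (g a) = if val a == 0%N then 1%N else i.
      by rewrite ffunE; case: ifP => _; rewrite inordK //; lia.
    have hg : admissible g.
      apply/andP; split; apply/forallP => a.
        by rewrite gv; case: ifP => _ //; lia.
      apply/forallP => b; apply/implyP; rewrite !gv.
      by case: a b => [[|[|a]] Ha] [[|[|b]] Hb] //=; lia.
    apply: (le_bmax hg).
    apply: le_bigmin => [|a _]; first exact: leey.
    apply: le_bigmin => [|b ab]; first exact: leey.
    move: ab; case: a => [[|[|]] ?] //; case: b => [[|[|]] ?] // _.
    by rewrite !gv.
- move=> k i /andP[k3 kp] /andP[ki iin].
  case: k k3 ki kp => [|[|[|m]]] //= _ ki _.
  apply/le_anti/andP; split.
  + apply: bigmax_le => [|f hf] /=; first exact: leNye.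
    pose om := (@Ordinal m.+3 m.+1 (leqnSn m.+2)).
    pose j := nat_of_ord (f om).
    have jlo : (m.+2 <= j)%N := adm_ge hf om.
    have fl : (f ord_max <= i)%N by rewrite -ltnS ltn_ord.
    have jf : (j < f ord_max)%N by exact: (adm_lt hf (a:=om) (b:=ord_max) (ltnSn _)).
    have jhi : (j < i)%N by apply: leq_trans jf fl.
    have key : (\big[mine/+oo%E]_(a : 'I_m.+3) \big[mine/+oo%E]_(b : 'I_m.+3 | (a < b)%N)
        (dd alpha x (f a) (f b))%:E <= mine (CMM alpha x m.+2 j) (dd alpha x j i)%:E)%E.
      rewrite le_min; apply/andP; split.
      * pose g : {ffun 'I_m.+2 -> 'I_j.+1} := [ffun a : 'I_m.+2 => inord (f (widen_ord (leqnSn _) a)) : 'I_j.+1].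
        have gv a : nat_of_ord (g a) = f (widen_ord (leqnSn _) a).
          rewrite ffunE inordK // ltnS; apply: (adm_le hf (a:=widen_ord (leqnSn _) a) (b:=om)) => /=.
          by rewrite -ltnS ltn_ord.
        have hg : admissible g.
          apply/andP; split; apply/forallP => a; first by rewrite gv; exact: (adm_pos hf (widen_ord (leqnSn _) a)).
          apply/forallP => b; apply/implyP => ab; rewrite !gv; exact: (adm_lt hf (a:=widen_ord (leqnSn _) a) (b:=widen_ord (leqnSn _) b) ab).
        apply: (le_bmax hg).
        apply: le_bigmin => [|a _]; first exact: leey.
        apply: le_bigmin => [|b ab]; first exact: leey.
        rewrite !gv; apply: (bmin_le (widen_ord (leqnSn _) a)) => //.
        by apply: (bmin_le (widen_ord (leqnSn _) b)).
      * apply: (bmin_le (om)) => //; apply: (bmin_le (ord_max)); first by rewrite /= ltnSn.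
        rewrite lee_fin; apply: mono => //; exact: leq_trans (isT : (0 < m.+2)%N) jlo.
    apply: (le_trans key).
    apply: (le_bigmax_seq _ j); by rewrite ?mem_index_iota ?jlo ?jhi.
  + rewrite big_nat_cond; apply: bigmax_le => [|j /andP[/andP[jlo jhi] _]]; first exact: leNye.
    rewrite {1}/CMM; apply: min_bigmax_le => g hg.
    have gj (a : 'I_m.+2) : (g a <= j)%N by rewrite -ltnS ltn_ord.
    pose f : {ffun 'I_m.+3 -> 'I_i.+1} := [ffun a : 'I_m.+3 => if (a < m.+2)%N then inord (g (inord a)) else inord i : 'I_i.+1].
    have fv a : nat_of_ord (f a) = if (a < m.+2)%N then nat_of_ord (g (inord a)) else i.
      rewrite ffunE; case: ifP => _; rewrite inordK //.
      by rewrite ltnS; apply: leq_trans (gj _) (ltnW jhi).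
    have hf : admissible f.
      apply/andP; split; apply/forallP => a.
        rewrite fv; case: ifP => _; first exact: (adm_pos hg (inord a)).
        exact: leq_trans (isT : (0 < m.+3)%N) ki.
      apply/forallP => b; apply/implyP => ab; rewrite !fv.
      have := ltn_ord b; have := ltn_ord a.
      case: ifP => ha'; case: ifP => hb; try lia.
        by move=> _ _; apply: (adm_lt hg (a:=inord a) (b:=inord b)); rewrite /= !inordK.
      move=> _ _; exact: leq_ltn_trans (gj _) jhi.
    apply: (le_bmax hf).
    apply: le_bigmin => [|a _]; first exact: leey.
    apply: le_bigmin => [|b ab]; first exact: leey.
    rewrite !fv; have := ltn_ord b; have := ltn_ord a.
    case: ifP => ha'; case: ifP => hb; try lia.
      move=> _ _; rewrite ge_min; apply/orP; left.
      apply: (bmin_le (inord a)) => //.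
      apply: (bmin_le (inord b)) => //=. by rewrite (inordK ha') (inordK hb).
    move=> _ _; rewrite ge_min; apply/orP; right.
    rewrite lee_fin; apply: mono => //; first exact: (adm_pos hg (inord a)).
Qed.
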